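(* Let $2\sqrt2-2<a\le1$ and $f_a(z)=z\big(z^2+(a-2)z+1-2a\big)$. Define subintervals of $[-a,2]$: $$I_1=\Big[-a,\tfrac{2-a-\sqrt{a^2+4a}}2\Big],\ I_2=\Big[\tfrac{2-a-\sqrt{a^2+4a}}2,0\Big],\ I_3=[0,0.25],\ I_4=\Big[0.25,\tfrac{2-a+\sqrt{a^2+4a}}2\Big],\ I_5=\Big[\tfrac{2-a+\sqrt{a^2+4a}}2,2\Big].$$ Then (i) $f_a(I_1)=I_1\cup I_2$, $f_a(I_4)=I_1\cup I_2$, and $f_a(I_5)=I_3\cup I_4\cup I_5$; (ii) $f_a(I_2)\subseteq I_3$ and $f_a(I_3)\subseteq I_2$.
   Context: For a set $S$, $f(S)=\{f(x):x\in S\}$. *)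

(* Defs.v *)
From HB Require Import structures.
From mathcomp Require Import all_boot all_order all_algebra.
From mathcomp Require Import all_classical all_reals.
Set Implicit Arguments. Unset Strict Implicit. Unset Printing Implicit Defensive.
Import Order.TTheory GRing.Theory Num.Theory.
Local Open Scope ring_scope.

Definition fa (R : realType) (a z : R) : R :=
  z * (z ^+ 2 + (a - 2) * z + 1 - 2 * a).

(* the nonzero roots of f_a: (2 - a -/+ sqrt(a^2 + 4a)) / 2 *)
Definition rootm (R : realType) (a : R) : R := (2 - a - Num.sqrt (a ^+ 2 + 4 * a)) / 2.
Definition rootp (R : realType) (a : R) : R := (2 - a + Num.sqrt (a ^+ 2 + 4 * a)) / 2.

(* Main.v *)
Require Import Defs.
From HB Require Import structures.
From mathcomp Require Import all_boot all_order all_algebra.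
From mathcomp Require Import all_classical all_reals.
From mathcomp Require Import polyrcf ring lra.
Import Order.TTheory GRing.Theory Num.Theory.
Local Open Scope ring_scope.
Local Open Scope classical_set_scope.

Lemma fa_ivt (R : realType) (a l u y : R) : l <= u ->
  (fa a l - y) * (fa a u - y) <= 0 -> exists2 z, l <= z <= u & fa a z = y.
Proof.
move=> lu h.
pose p : {poly R} := 'X^3 + (a-2)*:'X^2 + (1-2*a)*:'X - y%:P.
have pE z : p.[z] = fa a z - y.
  by rewrite /p !(hornerD, hornerN, hornerZ, hornerXn, hornerX, hornerC) /fa; ring.
have hp : p.[l] * p.[u] <= 0 by rewrite !pE.
have [z zi rz] := polyrcf.poly_ivt lu hp.
exists z; first by move: zi; rewrite in_itv.
by move/eqP: rz; rewrite pE => /eqP; rewrite subr_eq0 => /eqP.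
Qed.

Lemma sq_le (R : realType) (t s : R) : 0 <= s -> t ^+ 2 <= s ^+ 2 -> t <= s.
Proof.
move=> hs h; case: (lerP t 0) => ht; first lra.
by rewrite -(@ler_pXn2r _ 2) // nnegrE; lra.
Qed.

Lemma itvP' (R : realType) (l u z : R) : `[l, u]%classic z <-> l <= z <= u.
Proof. by rewrite /= in_itv. Qed.

Theorem lemma7 (R : realType) (a : R) :
  2 * Num.sqrt 2 - 2 < a -> a <= 1 ->
  let I1 := `[- a, rootm a]%classic in
  let I2 := `[rootm a, 0]%classic in
  let I3 := `[0, 1 / 4]%classic in
  let I4 := `[1 / 4, rootp a]%classic in
  let I5 := `[rootp a, 2]%classic in
  [/\ fa a @` I1 = I1 `|` I2,
      fa a @` I4 = I1 `|` I2,
      fa a @` I5 = I3 `|` I4 `|` I5,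
      fa a @` I2 `<=` I3 &
      fa a @` I3 `<=` I2].
Proof.
move=> ha1 ha2 I1 I2 I3 I4 I5.
have s2 : 7/5 < Num.sqrt (2:R).
  rewrite -(@ltr_pXn2r _ 2) ?nnegrE ?sqrtr_ge0 //; last lra.
  by rewrite sqr_sqrtr; lra.
have ha0 : 4/5 < a by lra.
set s := Num.sqrt (a ^+ 2 + 4 * a).
have hs0 : 0 <= s by exact: sqrtr_ge0.
have hs2 : s ^+ 2 = a ^+ 2 + 4 * a by rewrite sqr_sqrtr //; nra.
have rmE : rootm a = (2 - a - s) / 2 by [].
have rpE : rootp a = (2 - a + s) / 2 by [].
set m := rootm a in I1 I2 rmE *; set p := rootp a in I4 I5 rpE *.
have fE z : fa a z = z * (z - m) * (z - p).
  rewrite /fa rmE rpE; apply: (@mulfI _ 4); first by lra.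
  have -> : (4:R) * (z * (z - (2 - a - s) / 2) * (z - (2 - a + s) / 2)) =
     z * ((2 * z - 2 + a)^+2 - s^+2) by field.
  rewrite hs2; ring.
have fA z : fa a z + a = (z + a) * (z - 1) ^+ 2 by rewrite /fa; ring.
have f2 z : fa a z - 2 = (z - 2) * (z ^+ 2 + a * z + 1) by rewrite /fa; ring.
have hsa : s <= 2 + a by apply: sq_le; [lra| rewrite hs2; nra].
have hma : - a <= m by rewrite rmE; lra.
have hm0 : m <= - 5 / 16.
  have : 21/8 - a <= s by apply: sq_le => //; rewrite hs2; nra.
  rewrite rmE; lra.
have hp1 : 1 <= p.
  have : a <= s by apply: sq_le => //; rewrite hs2; nra.
  rewrite rpE; lra.
have hp2 : p <= 2 by rewrite rpE; lra.
have fge z : - a <= z -> - a <= fa a z.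
  move=> hz; have := fA z; have : 0 <= (z + a) * (z - 1) ^+ 2.
    by apply: mulr_ge0; [lra | exact: sqr_ge0].
  lra.
have fle z : z <= 2 -> fa a z <= 2.
  move=> hz; have := f2 z; have : (z - 2) * (z ^+ 2 + a * z + 1) <= 0.
    by apply: mulr_le0_ge0; [lra | have := sqr_ge0 (z + a / 2); nra].
  lra.
have fa_m : fa a m = 0 by rewrite fE; ring.
have fa_p : fa a p = 0 by rewrite fE; ring.
have fa_1 : fa a 1 = - a by rewrite /fa; ring.
have fa_ma : fa a (- a) = - a by rewrite /fa; ring.
have fa_2 : fa a 2 = 2 by rewrite /fa; ring.
have neg3 z : 0 <= z - m -> z - p <= 0 -> z <= 0 -> 0 <= fa a z.
  move=> h1 h2 h3; rewrite fE.
  have -> : z * (z - m) * (z - p) = (- z) * (z - m) * (- (z - p)) by ring.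
  by apply: mulr_ge0; [apply: mulr_ge0|]; lra.
have neg1 z : 0 <= z - m -> z - p <= 0 -> 0 <= z -> fa a z <= 0.
  move=> h1 h2 h3; rewrite fE.
  have -> : z * (z - m) * (z - p) = - (z * (z - m) * (- (z - p))) by ring.
  by rewrite oppr_le0; apply: mulr_ge0; [apply: mulr_ge0|]; lra.
have neg1' z : z - m <= 0 -> z - p <= 0 -> z <= 0 -> fa a z <= 0.
  move=> h1 h2 h3; rewrite fE.
  have -> : z * (z - m) * (z - p) = - ((- z) * (- (z - m)) * (- (z - p))) by ring.
  by rewrite oppr_le0; apply: mulr_ge0; [apply: mulr_ge0|]; lra.
have pos z : 0 <= z - m -> 0 <= z - p -> 0 <= z -> 0 <= fa a z.
  move=> h1 h2 h3; rewrite fE.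
  by apply: mulr_ge0; [apply: mulr_ge0|]; lra.
split.
- apply/seteqP; split.
  + move=> _ [z /itvP' hz <-].
    have hl := fge z (ltac:(lra)); have hu := neg1' z (ltac:(lra)) (ltac:(lra)) (ltac:(lra)).
    by case: (lerP (fa a z) m) => h; [left|right]; apply/itvP'; lra.
  + move=> y hy; have {hy} hy : - a <= y <= 0.
      by case: hy => /itvP'; lra.
    have [|z hz <-] := @fa_ivt R a (- a) m y hma.
      by rewrite fa_ma fa_m; nra.
    by exists z => //; apply/itvP'.
- apply/seteqP; split.
  + move=> _ [z /itvP' hz <-].
    have hl := fge z (ltac:(lra)); have hu := neg1 z (ltac:(lra)) (ltac:(lra)) (ltac:(lra)).
    by case: (lerP (fa a z) m) => h; [left|right]; apply/itvP'; lra.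
  + move=> y hy; have {hy} hy : - a <= y <= 0.
      by case: hy => /itvP'; lra.
    have [|z hz <-] := @fa_ivt R a 1 p y hp1.
      by rewrite fa_1 fa_p; nra.
    by exists z => //; apply/itvP'; lra.
- apply/seteqP; split.
  + move=> _ [z /itvP' hz <-].
    have hl := pos z (ltac:(lra)) (ltac:(lra)) (ltac:(lra)); have hu := fle z (ltac:(lra)).
    case: (lerP (fa a z) (1/4)) => h; first by left; left; apply/itvP'; lra.
    by case: (lerP (fa a z) p) => h'; [left; right|right]; apply/itvP'; lra.
  + move=> y hy; have {hy} hy : 0 <= y <= 2.
      by case: hy => [[]|] /itvP'; lra.
    have [|z hz <-] := @fa_ivt R a p 2 y hp2.
      by rewrite fa_p fa_2; nra.
    by exists z => //; apply/itvP'; lra.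
- move=> _ [z /itvP' hz <-]; apply/itvP'.
  have hl := neg3 z (ltac:(lra)) (ltac:(lra)) (ltac:(lra)).
  have h1 : 0 <= (1 - a) * z ^+ 2 by apply: mulr_ge0; [lra| exact: sqr_ge0].
  have h2 : 0 <= (1 - a) * (- z) by apply: mulr_ge0; lra.
  have h3 : 0 <= (- z) * z ^+ 2 by apply: mulr_ge0; [lra| exact: sqr_ge0].
  have h4 := sqr_ge0 (z + 1/2).
  apply/andP; split => //; rewrite /fa; nra.
- move=> _ [z /itvP' hz <-]; apply/itvP'.
  have hu := neg1 z (ltac:(lra)) (ltac:(lra)) (ltac:(lra)).
  have h1 : 0 <= z ^+ 2 + (a - 2) * z + 1 - 2 * a + 5 / 4.
    have := sqr_ge0 z; have : 0 <= (2 - a) * (1/4 - z) by apply: mulr_ge0; lra.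
    nra.
  have h2 : 0 <= z * (z ^+ 2 + (a - 2) * z + 1 - 2 * a + 5 / 4) by apply: mulr_ge0; lra.
  apply/andP; split => //; rewrite /fa; nra.
Qed.
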